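(* Let $I\subseteq\mathbb{R}$ be an interval, $p\in I$, and let $f: I\to\mathbb{R}$ be continuous such that one of the following holds: (i) $f|_{]-\infty,p]\cap I}$ and $f|_{[p,\infty[\cap I}$ are both convex; (ii) $f|_{]-\infty,p]\cap I}$ and $f|_{[p,\infty[\cap I}$ are both concave; (iii) $f|_{]-\infty,p]\cap I}$ is convex and $f|_{[p,\infty[\cap I}$ is concave; (iv) $f|_{]-\infty,p]\cap I}$ is concave and $f|_{[p,\infty[\cap I}$ is convex. Then $f$ is star-convex and $p$ is a center of $f$.
   Context: A function $f: I\to\mathbb{R}$ is star-convex if there exists $p\in I$ (a center) such that for every $x\in I$, either $f(tx+(1-t)p)\leq tf(x)+(1-t)f(p)$ for all $t\in[0,1]$, or $f(tx+(1-t)p)\geq tf(x)+(1-t)f(p)$ for all $t\in[0,1]$; i.e. for each $x$ the segment joining $(x,f(x))$ and $(p,f(p))$ lies entirely in the epigraph or entirely in the hypograph of $f$. *)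

(* Defs.v *)
From HB Require Import structures.
From mathcomp Require Import all_boot all_order all_algebra.
From mathcomp Require Import all_classical all_reals all_analysis.
Set Implicit Arguments. Unset Strict Implicit. Unset Printing Implicit Defensive.
Import Order.TTheory GRing.Theory Num.Theory numFieldNormedType.Exports.
Local Open Scope classical_set_scope.
Local Open Scope ring_scope.

Definition convex_on (R : realType) (D : set R) (f : R -> R) : Prop :=
  forall x y t, D x -> D y -> 0 <= t <= 1 ->
    f (t * x + (1 - t) * y) <= t * f x + (1 - t) * f y.

Definition concave_on (R : realType) (D : set R) (f : R -> R) : Prop :=
  forall x y t, D x -> D y -> 0 <= t <= 1 ->
    t * f x + (1 - t) * f y <= f (t * x + (1 - t) * y).

Definition star_center (R : realType) (I : set R) (f : R -> R) (p : R) : Prop :=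
  I p /\
  forall x, I x ->
    (forall t, 0 <= t <= 1 -> f (t * x + (1 - t) * p) <= t * f x + (1 - t) * f p)
    \/
    (forall t, 0 <= t <= 1 -> f (t * x + (1 - t) * p) >= t * f x + (1 - t) * f p).

Definition star_convex (R : realType) (I : set R) (f : R -> R) : Prop :=
  exists p, star_center I f p.

(* Main.v *)
Require Import Defs.
From HB Require Import structures.
From mathcomp Require Import all_boot all_order all_algebra.
From mathcomp Require Import all_classical all_reals all_analysis.
Import Order.TTheory GRing.Theory Num.Theory numFieldNormedType.Exports.
Local Open Scope classical_set_scope.
Local Open Scope ring_scope.

Theorem proposition4p1 (R : realType) (I : set R) (p : R) (f : R -> R) :
  is_interval I -> I p -> {within I, continuous f} ->
  let L := I `&` [set x | x <= p] in
  let U := I `&` [set x | p <= x] in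
  (convex_on L f /\ convex_on U f) \/
  (concave_on L f /\ concave_on U f) \/
  (convex_on L f /\ concave_on U f) \/
  (concave_on L f /\ convex_on U f) ->
  star_convex I f /\ star_center I f p.
Proof.
move=> _ Ip _ L U H.
have Lp : L p by split; [exact: Ip | exact: lexx].
have Up : U p by split; [exact: Ip | exact: lexx].
suff sc : star_center I f p by split => //; exists p.
split => // x Ix.
have [xp|px] := leP x p.
  have Lx : L x by split; [exact: Ix | exact: xp].
  case: H => [[cL _]|[[cL _]|[[cL _]|[cL _]]]].
  - by left => t ht; exact: (cL x p t Lx Lp ht).
  - by right => t ht; exact: (cL x p t Lx Lp ht).
  - by left => t ht; exact: (cL x p t Lx Lp ht).
  - by right => t ht; exact: (cL x p t Lx Lp ht).
have Ux : U x by split; [exact: Ix | exact: ltW].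
case: H => [[_ cU]|[[_ cU]|[[_ cU]|[_ cU]]]].
- by left => t ht; exact: (cU x p t Ux Up ht).
- by right => t ht; exact: (cU x p t Ux Up ht).
- by right => t ht; exact: (cU x p t Ux Up ht).
- by left => t ht; exact: (cU x p t Ux Up ht).
Qed.
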